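(* The language $L_1=\{\,a^n b^{n+\lfloor \sqrt{n} \rfloor} \mid n \ge 1\,\}$ belongs to $\mathscr{L}_{rt}(\mathrm{MC\text{-}OCA}(1))$, i.e., it is accepted by some real-time one-way cellular automaton that is max communication bounded by a constant.
   Context: A cellular automaton (CA) is a system $\langle S,F,A,B,\#,b_l,b_r,\delta\rangle$ with finite nonempty state set $S$, accepting states $F\subseteq S$, nonempty input alphabet $A\subseteq S$, set $B$ of communication symbols, boundary symbol $\#\notin B$, communication functions $b_l,b_r:S\to B\cup\{\bot\}$ (information sent to the left/right neighbor; $\bot$ means nothing is sent), and local transition function $\delta:(B\cup\{\#,\bot\})\times S\times(B\cup\{\#,\bot\})\to S$. On input $w=a_1\cdots a_n\in A^+$ the array has cells $1,\dots,n$, initial configuration $c_0(i)=a_i$, and $c_{t+1}(i)=\delta(b_r(c_t(i-1)),c_t(i),b_l(c_t(i+1)))$ for $2\le i\le n-1$; the leftmost cell receives $\#$ from the left at the first step and $\bot$ afterwards, symmetrically for the rightmost cell. The input is accepted if at some time the leftmost cell enters a state in $F$. The device has time complexity $t$ if every accepted $w$ is accepted within $t(|w|)$ steps; real time means $t(n)=n$. A one-way CA (OCA) is a CA in which $b_r$ maps every state to $\bot$ and the leftmost cell does not receive the boundary symbol. The number of communications between cells $i$ and $i+1$ up to time $t$ is $\mathrm{com}(i,t)=|\{j: 0\le j<t,\ b_r(c_j(i))\ne\bot \text{ or } b_l(c_j(i+1))\ne\bot\}|$. For a device of time complexity $t$, $\mathrm{mcom}(w)=\max_{1\le i\le |w|-1}\mathrm{com}(i,t(|w|))$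 and $\mathrm{scom}(w)=\sum_{i=1}^{|w|-1}\mathrm{com}(i,t(|w|))$. A device is max (resp. sum) communication bounded by $f$ if every accepted $w$ is accepted with a computation having $\mathrm{mcom}(w)\le f(|w|)$ (resp. $\mathrm{scom}(w)\le f(|w|)$). $\mathrm{MC\text{-}OCA}(f)$ (resp. $\mathrm{SC\text{-}OCA}(f)$, $\mathrm{MC\text{-}CA}(f)$) denotes OCAs (resp. OCAs, CAs) that are max (resp. sum, max) communication bounded by some $g\in O(f)$. $\mathscr{L}_{rt}(X)$ is the family of languages accepted by real-time devices of type $X$. *)

(* Defs.v *)
From mathcomp Require Import all_boot.
Set Implicit Arguments. Unset Strict Implicit. Unset Printing Implicit Defensive.

(* Messages received by a cell: nothing (bot), the boundary symbol #,
   or a communication symbol from B (so # is not in B by construction). *)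
Variant msg (B : Type) := Bot | Hash | Sym of B.
Arguments Bot {B}. Arguments Hash {B}.

Definition lift_msg (B : Type) (o : option B) : msg B :=
  match o with Some x => Sym x | None => Bot end.

(* A cellular automaton with input alphabet Sigma embedded (injectively)
   into the finite state set: <S,F,A,B,#,b_l,b_r,delta>.
   None encodes "bot" for the communication functions. *)
Record CA (Sigma : Type) := {
  st : finType;
  bsym : finType;
  acc : pred st;
  inp : Sigma -> st;
  inp_inj : injective inp;
  bl : st -> option bsym;
  br : st -> option bsym;
  delta : msg bsym -> st -> msg bsym -> st
}.

Arguments acc {Sigma} c _.
Arguments inp {Sigma} c _.
Arguments bl {Sigma} c _.
Arguments br {Sigma} c _.
Arguments delta {Sigma} c _ _ _.

Section Semantics.
Variables (Sigma : Type) (M : CA Sigma).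

(* [twoway = false] is the one-way semantics: the leftmost cell does not
   receive the boundary symbol. Cells are numbered 0 .. n-1. *)
Definition left_in (twoway : bool) (c : nat -> st M) (t i : nat) : msg (bsym M) :=
  if i == 0 then (if twoway && (t == 0) then Hash else Bot)
  else lift_msg (br M (c i.-1)).

Definition right_in (n : nat) (c : nat -> st M) (t i : nat) : msg (bsym M) :=
  if i == n.-1 then (if t == 0 then Hash else Bot)
  else lift_msg (bl M (c i.+1)).

Fixpoint conf (twoway : bool) (x : Sigma) (w : seq Sigma) (t : nat) : nat -> st M :=
  match t with
  | 0 => fun i => inp M (nth x (x :: w) i)
  | t'.+1 =>
      let c := conf twoway x w t' in
      fun i => delta M (left_in twoway c t' i) (c i) (right_in (size w).+1 c t' i)
  end.

(* accepted within T steps: the leftmost cell enters an accepting state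
   at some time t <= T. Empty input is never accepted (inputs are in A^+). *)
Definition accepts_within (twoway : bool) (w : seq Sigma) (T : nat) : Prop :=
  match w with
  | [::] => False
  | x :: w' => exists2 t, t <= T & acc M (conf twoway x w' t 0)
  end.

Definition accepts (twoway : bool) (w : seq Sigma) : Prop :=
  exists T, accepts_within twoway w T.

Definition realtime (twoway : bool) : Prop :=
  forall w, accepts twoway w -> accepts_within twoway w (size w).

(* com(i,T) for the boundary between cells i and i+1 (0-indexed) *)
Definition com (twoway : bool) (x : Sigma) (w : seq Sigma) (i T : nat) : nat :=
  count (fun j => isSome (br M (conf twoway x w j i)) ||
                  isSome (bl M (conf twoway x w j i.+1))) (iota 0 T).

Definition mcom (twoway : bool) (tc : nat -> nat) (w : seq Sigma) : nat :=
  match w with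
  | [::] => 0
  | x :: w' => \max_(i < size w') com twoway x w' i (tc (size w))
  end.

(* one-way CA: b_r is constantly bot (and the one-way semantics is used) *)
Definition is_OCA : Prop := forall s, br M s = None.

End Semantics.

Variant ab := ab_a | ab_b.

Definition L1 (w : seq ab) : Prop :=
  exists2 n, 1 <= n & w = nseq n ab_a ++ nseq (n + Nat.sqrt n) ab_b.

(* Main.v *)
From HB Require Import structures.
Require Import Defs.
From mathcomp Require Import all_boot.
From Stdlib Require Import PeanoNat Lia.
Set Implicit Arguments. Unset Strict Implicit. Unset Printing Implicit Defensive.


Inductive status := NY | WC | Dn | W0 | W1 | W2 | W3 | W4.
Definition status_enc (s:status) : 'I_8 := inord (match s with NY=>0|WC=>1|Dn=>2|W0=>3|W1=>4|W2=>5|W3=>6|W4=>7 end).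
Definition status_dec (i:'I_8) : status := match nat_of_ord i with 0=>NY|1=>WC|2=>Dn|3=>W0|4=>W1|5=>W2|6=>W3|_=>W4 end.
Lemma status_encK : cancel status_enc status_dec. Proof. by case; rewrite /status_dec /status_enc inordK. Qed.
HB.instance Definition _ := Finite.copy status (can_type status_encK).

Inductive core := CInA | CInB | CBpure | CGarb | CRow of bool & status & status & status.
Definition core_enc (c : core) : ('I_4 + (bool * status * status * status))%type :=
  match c with CInA => inl (inord 0) | CInB => inl (inord 1) | CBpure => inl (inord 2)
  | CGarb => inl (inord 3) | CRow s a b c => inr (s,a,b,c) end.
Definition core_dec (x : ('I_4 + (bool * status * status * status))%type) : core :=
  match x with inl i => match nat_of_ord i with 0 => CInA | 1 => CInB | 2 => CBpure | _ => CGarb end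
  | inr (s,a,b,c) => CRow s a b c end.
Lemma core_encK : cancel core_enc core_dec. Proof. by case=> //= *; rewrite inordK. Qed.
HB.instance Definition _ := Finite.copy core (can_type core_encK).

Inductive msgc := Ma | Mg | Mf of bool & bool & bool.
Definition msgc_enc (m : msgc) : (bool + (bool*bool*bool))%type :=
  match m with Ma => inl true | Mg => inl false | Mf x y z => inr (x,y,z) end.
Definition msgc_dec (x : (bool + (bool*bool*bool))%type) : msgc :=
  match x with inl true => Ma | inl false => Mg | inr (x,y,z) => Mf x y z end.
Lemma msgc_encK : cancel msgc_enc msgc_dec. Proof. by case=> //= *. Qed.
HB.instance Definition _ := Finite.copy msgc (can_type msgc_encK).

Definition wait (n : nat) : status :=
  match n with 0 => W0 | 1 => W1 | 2 => W2 | 3 => W3 | _ => W4 end.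
Definition decs (s : status) : status :=
  match s with W0 => Dn | W1 => W0 | W2 => W1 | W3 => W2 | W4 => W3 | x => x end.
Definition isW0 (s : status) : bool := if s is W0 then true else false.
Definition isNY (s : status) : bool := if s is NY then true else false.

Definition rowstep (s : bool) (a b c : status) (fa fb fc : bool) : core :=
  let s' := if isNY a && fa then fb else s in
  let a' := match a with NY => if fa then (if fb then W2 else W1) else NY | x => decs x end in
  let b' := match b with
            | NY => if fb then (if s' then (if fc then W4 else WC) else W0) else NY
            | WC => if fc then W4 else WC
            | x => decs x end in
  let c' := match c with NY => if fc then (if s' then W4 else W1) else NY | x => decs x end in
  CRow s' a' b' c'.

Definition Apure := CRow false NY NY NY.

Definition msgflags (m : option msgc) : bool * bool * bool :=
  match m with Some (Mf x y z) => (x, y, z) | _ => (false, false, false) end.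

Definition delc (c : core) (m : option msgc) : core :=
  match c with
  | CGarb => CGarb
  | _ => if m is Some Mg then CGarb else
    match c with
    | CInB => if m is Some Ma then CGarb else CBpure
    | CBpure => CBpure
    | CInA => if m is Some Ma then Apure else
              let: (x, y, z) := msgflags m in rowstep false NY NY NY x y z
    | CRow s a b c => let: (x, y, z) := msgflags m in rowstep s a b c x y z
    | CGarb => CGarb
    end
  end.

Definition blc (c : core) : option msgc :=
  match c with
  | CInA => Some Ma
  | CInB => Some (Mf true true true)
  | CBpure => None
  | CGarb => Some Mg
  | CRow _ a b c => if [|| isW0 a, isW0 b | isW0 c] then Some (Mf (isW0 a) (isW0 b) (isW0 c)) else None
  end.

Definition rs (g0 b0 c0 G1 B1 C1 q : nat) : core :=
  let sq := g0 == b0 in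
  CRow ((g0 <= q) && sq)
    (if q < g0 then NY else if q <= G1 then wait (G1 - q) else Dn)
    (if q < b0 then NY else if sq && (q < c0) then WC else if q <= B1 then wait (B1 - q) else Dn)
    (if q < c0 then NY else if q <= C1 then wait (C1 - q) else Dn).

Definition rsok (g0 b0 c0 G1 B1 C1 : nat) : Prop :=
  [/\ 1 <= g0, g0 <= b0, b0 <= c0,
      g0 = b0 -> [/\ G1 = g0 + 2, B1 = c0 + 4 & C1 = c0 + 4] &
      g0 <> b0 -> [/\ G1 = g0 + 1, B1 = b0 & C1 = c0 + 1]].

Lemma rs0 g0 b0 c0 G1 B1 C1 : rsok g0 b0 c0 G1 B1 C1 -> rs g0 b0 c0 G1 B1 C1 0 = Apure.
Proof.
case=> h1 h2 h3 _ _; rewrite /rs /Apure.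
move: h1 h2 h3; case: g0 => // g0; case: b0 => // b0; case: c0 => // c0.
Qed.



Lemma decs_waitS n q : q < n -> n - q <= 4 -> decs (wait (n - q)) = wait (n - q.+1).
Proof.
move=> h1 h2; rewrite subnS; move: h1 h2; rewrite -subn_gt0.
by case: (n - q) => [|[|[|[|[|d]]]]].
Qed.
Lemma decs_wait0 n q : n - q = 0 -> decs (wait (n - q)) = Dn.
Proof. by move=> ->. Qed.

Ltac contra := exfalso; unfold addn, subn in *; lia.
Ltac crush := repeat (simpl; first [
    match goal with |- context [?x == ?y] => case: (@eqP _ x y) => ? end
  | match goal with |- context [?x <= ?y] => case: (leqP x y) => /leP ? end
  | match goal with |- context [wait (?n - ?m)] =>
       let E := fresh "E" in case E: (n - m) => [|[|[|[|[|?]]]]] end ];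
  try contra); try reflexivity.

Lemma rs_step g0 b0 c0 G1 B1 C1 q : rsok g0 b0 c0 G1 B1 C1 ->
  rs g0 b0 c0 G1 B1 C1 q.+1 =
  match rs g0 b0 c0 G1 B1 C1 q with
  | CRow s a b c => rowstep s a b c (q.+1 == g0) (q.+1 == b0) (q.+1 == c0)
  | x => x end.
Proof.
case=> h1 h2 h3 hsq hns.
rewrite /rs /rowstep.
move/leP: h1 => h1; move/leP: h2 => h2; move/leP: h3 => h3.
case: (eqVneq g0 b0) => [e|ne].
{ have [-> -> ->] := hsq e. subst b0.
  crush. }
{ have [-> -> ->] := hns (elimN eqP ne). move/eqP: ne => ne.
  crush. }
Qed.

Lemma rs_msg g0 b0 c0 G1 B1 C1 q : rsok g0 b0 c0 G1 B1 C1 ->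
  blc (rs g0 b0 c0 G1 B1 C1 q) =
  if [|| q == G1, q == B1 | q == C1] then Some (Mf (q == G1) (q == B1) (q == C1)) else None.
Proof.
case=> h1 h2 h3 hsq hns.
rewrite /rs /blc.
move/leP: h1 => h1; move/leP: h2 => h2; move/leP: h3 => h3.
case: (eqVneq g0 b0) => [e|ne].
{ have [-> -> ->] := hsq e. subst b0. crush. }
{ have [-> -> ->] := hns (elimN eqP ne). move/eqP: ne => ne. crush. }
Qed.

Definition Gt p := p + Nat.sqrt p + 1.
Definition Bt p := Nat.sqrt p * Nat.sqrt p + 3 * Nat.sqrt p + 1.
Definition Ct p := p + 3 * Nat.sqrt p + 1.

Lemma sqrt_case k :
  (Nat.sqrt k.+1 = Nat.sqrt k /\ (k.+1 < Nat.mul (Nat.sqrt k).+1 (Nat.sqrt k).+1)%coq_nat) \/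
  (Nat.sqrt k.+1 = (Nat.sqrt k).+1 /\ k.+1 = Nat.mul (Nat.sqrt k).+1 (Nat.sqrt k).+1).
Proof.
have [h1 h2] := Nat.sqrt_spec' k.
move: (Nat.sqrt k) h1 h2 => s h1 h2.
case: (Compare_dec.lt_dec k.+1 (Nat.mul s.+1 s.+1)) => h.
- left; split; [apply Nat.sqrt_unique; split; lia | lia].
- right; have e : k.+1 = (Nat.mul s.+1 s.+1) by lia.
  split => //; apply Nat.sqrt_unique; rewrite e; split; nia.
Qed.

Lemma rsok_row k : rsok (Gt k) (Bt k) (Ct k) (Gt k.+1) (Bt k.+1) (Ct k.+1).
Proof.
have [h1 h2] := Nat.sqrt_spec' k.
rewrite /rsok /Gt /Bt /Ct.
have [[e1 h]|[e1 h]] := sqrt_case k; rewrite e1; move: (Nat.sqrt k) h1 h2 h e1 => s h1 h2 h e1;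
  split; try (apply/leP); unfold addn, muln in *; try lia;
  move=> E; split; nia.
Qed.


Ltac nlia := unfold addn, subn, muln, minn, maxn in *; lia.

Definition isa (x : ab) : bool := if x is ab_a then true else false.
Definition leab (x y : ab) : bool := isa x || ~~ isa y.
Definition inpc (x : ab) : core := if x is ab_a then CInA else CInB.
Definition rowc p q := rs (Gt p.-1) (Bt p.-1) (Ct p.-1) (Gt p) (Bt p) (Ct p) q.
Definition clsd p q := if p is 0 then CBpure else if q is 0 then Apure else rowc p q.
Definition Fw (u : seq ab) : core :=
  match u with
  | [::] => CBpure
  | [:: x] => inpc x
  | _ => if sorted leab u then clsd (count isa u) (count (predC isa) u) else CGarb
  end.
Definition abw p q := nseq p ab_a ++ nseq q ab_b.
Definition init (u : seq ab) := take (size u).-1 u.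

Lemma Fw_ge2 u : 2 <= size u ->
  Fw u = if sorted leab u then clsd (count isa u) (count (predC isa) u) else CGarb.
Proof. by case: u => [|x [|y s]]. Qed.

Lemma size_abw p q : size (abw p q) = p + q.
Proof. by rewrite size_cat !size_nseq. Qed.

Lemma sorted_abw p q : sorted leab (abw p q).
Proof.
elim: p => [|p IH] /=.
- have hb : forall q, path leab ab_b (nseq q ab_b) by elim.
  by rewrite /abw /=; case: q.
- move: IH; rewrite /abw /=; case: (nseq p ab_a ++ nseq q ab_b) => //.
Qed.

Lemma count_abw p q : count isa (abw p q) = p /\ count (predC isa) (abw p q) = q.
Proof. rewrite /abw !count_cat !count_nseq /=; split; nlia. Qed.

Lemma F_ab p q : 2 <= p + q -> Fw (abw p q) = clsd p q.
Proof.
move=> h; rewrite Fw_ge2 ?size_abw // sorted_abw.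
by have [-> ->] := count_abw p q.
Qed.

Lemma sorted_abwE u : sorted leab u -> u = abw (count isa u) (count (predC isa) u).
Proof.
elim: u => [|x s IH] //= hs.
have hs' : sorted leab s by move: hs; case: s {IH} => //= y s /andP[].
have {}IH := IH hs'.
case: x hs => /= hs.
- by rewrite {1}IH.
- have hp : count isa s = 0.
    by move: hs; rewrite {1}IH /abw; case: (count isa s).
  by rewrite hp {1}IH hp.
Qed.

Definition msg_of (x y z : bool) : option msgc := if [|| x, y | z] then Some (Mf x y z) else None.

Lemma delc_row s a b c x y z : delc (CRow s a b c) (msg_of x y z) = rowstep s a b c x y z.
Proof. by case: x; case: y; case: z. Qed.
Lemma delc_inA x y z : delc CInA (msg_of x y z) = rowstep false NY NY NY x y z.
Proof. by case: x; case: y; case: z. Qed.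

Lemma rowc_msg p q : 1 <= p -> blc (rowc p q) = msg_of (q == Gt p) (q == Bt p) (q == Ct p).
Proof. by case: p => // p _; rewrite /rowc rs_msg //; apply: rsok_row. Qed.

Lemma rowc_step p q : 1 <= p -> rowc p q.+1 =
  match rowc p q with CRow s a b c => rowstep s a b c (q.+1 == Gt p.-1) (q.+1 == Bt p.-1) (q.+1 == Ct p.-1)
  | x => x end.
Proof. by case: p => // p _; rewrite /rowc rs_step //; apply: rsok_row. Qed.

Lemma rowc0 p : 1 <= p -> rowc p 0 = Apure.
Proof. by case: p => // p _; rewrite /rowc rs0 //; apply: rsok_row. Qed.

Lemma rowc_row p q : exists s a b c, rowc p q = CRow s a b c.
Proof. by rewrite /rowc /rs; do 4 eexists. Qed.

Lemma abwS p q : abw p q.+1 = abw p q ++ [:: ab_b].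
Proof. by rewrite /abw -catA; congr (_ ++ _); elim: q => //= q ->. Qed.

Lemma init_abwS p q : init (abw p q.+1) = abw p q.
Proof. by rewrite abwS /init size_cat addn1 /= take_size_cat. Qed.

Lemma msg_prev p q : 1 <= q ->
  blc (Fw (abw p q)) = msg_of (q == Gt p) (q == Bt p) (q == Ct p).
Proof.
case: p => [|p] hq.
- case: q hq => [|[|q]] // _.
  by rewrite F_ab //= /msg_of /Gt /Bt /Ct /=.
- rewrite F_ab; last by move: hq; rewrite addSn ltnS; case: q => //= q; rewrite addnS.
  rewrite /clsd; case: q hq => // q _. by rewrite rowc_msg.
Qed.

Lemma Frec_ab p q : 2 <= p + q ->
  Fw (abw p q) = delc (Fw (init (abw p q))) (blc (Fw (behead (abw p q)))).
Proof.
case: q => [|q].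
- rewrite addn0 => hp.
  have -> : init (abw p 0) = abw p.-1 0.
    by rewrite /init /abw !cats0 size_nseq; case: p {hp} => //= p; elim: p => //= p ->.
  have -> : behead (abw p 0) = abw p.-1 0 by case: p {hp}.
  case: p hp => [|[|[|p]]] // _.
  rewrite F_ab // F_ab //.
- rewrite init_abwS.
  case: p => [|p].
  + rewrite add0n => hq.
    case: q hq => [|[|q]] // _.
    by rewrite F_ab // F_ab.
  + move=> _. have -> : behead (abw p.+1 q.+1) = abw p q.+1 by [].
    rewrite msg_prev // F_ab; last by rewrite addnS.
    rewrite /clsd rowc_step //.
    have [s [a [b [c E]]]] := rowc_row p.+1 q.
    have HF : forall x y z, delc (Fw (abw p.+1 q)) (msg_of x y z) = delc (rowc p.+1 q) (msg_of x y z).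
      move=> x y z; case: p E => [|p] E.
      * case: q E => [|q] E.
        - by rewrite rowc0 // delc_inA delc_row.
        - by rewrite F_ab.
      * by rewrite F_ab //; case: q E => [|q] E //; rewrite rowc0.
    by rewrite HF E delc_row.
Qed.

Lemma delc_g c : delc c (Some Mg) = CGarb. Proof. by case: c. Qed.

Lemma Frec u : 2 <= size u -> Fw u = delc (Fw (init u)) (blc (Fw (behead u))).
Proof.
move=> hu.
case hs: (sorted leab u).
- have E := sorted_abwE hs.
  move: hu; rewrite E; set p := count isa u; set q := count (predC isa) u.
  clearbody p q => hu; apply: Frec_ab; by rewrite size_abw in hu.
- rewrite Fw_ge2 // hs.
  case: u hu hs => [|x [|y [|z s]]] //.
  + by case: x; case: y.
  + move=> _ /=.
    rewrite /init /=.
    case hxy : (leab x y) => /= hp.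
    * by rewrite hp /= delc_g.
    * by [].
Qed.


Definition stT := option (core * bool).
Definition bsT := (option msgc * bool)%type.
Definition blS (s : stT) : option bsT :=
  match s with
  | Some (c, false) => if blc c is Some m then Some (Some m, false) else None
  | Some (c, true) => Some (blc c, true)
  | None => None end.
Definition delS (l : msg bsT) (s : stT) (r : msg bsT) : stT :=
  match s with
  | Some (c, false) =>
      match r with
      | Hash => Some (delc c (blc c), true)
      | Sym (m, e) => Some (delc c m, e)
      | Bot => Some (delc c None, false) end
  | _ => None end.
Definition accS (s : stT) : bool :=
  match s with Some (c, true) => if blc c is Some (Mf true _ _) then true else false | _ => false end.
Definition inpS (x : ab) : stT := Some (inpc x, false).
Lemma inpS_inj : injective inpS. Proof. by case; case. Qed.

Definition Mca : CA ab :=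
  {| st := Finite.clone _ stT; bsym := Finite.clone _ bsT; acc := accS; inp := inpS;
     inp_inj := inpS_inj; bl := blS; br := fun _ => None; delta := delS |}.

Ltac toP := repeat match goal with
  | H : is_true (_ <= _) |- _ => move/leP: H => H
  | H : is_true (_ == _) |- _ => move/eqP: H => H
  | H : is_true (~~ (_ == _)) |- _ => move/eqP: H => H
  end.
Ltac bt := by apply/leP; toP; nlia.
Ltac bf := by apply/negbTE/negP => /leP; toP; nlia.
Ltac et := by apply/eqP; toP; nlia.
Ltac ef := by apply/negbTE/eqP; toP; nlia.

Lemma sub_init (w : seq ab) i t : i + t.+1 < size w ->
  init (take t.+2 (drop i w)) = take t.+1 (drop i w).
Proof.
move=> h; rewrite /init size_takel ?size_drop; last bt.
by rewrite take_takel.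
Qed.

Lemma behead_drop (w : seq ab) i : behead (drop i w) = drop i.+1 w.
Proof. by rewrite -drop1 drop_drop add1n. Qed.

Lemma sub_behead (w : seq ab) i t :
  behead (take t.+2 (drop i w)) = take t.+1 (drop i.+1 w).
Proof. rewrite -behead_drop; by case: (drop i w). Qed.

Lemma sub_full (w : seq ab) i t : i + t.+1 = size w -> take t.+1 (drop i w) = drop i w.
Proof. move=> h; rewrite take_oversize // size_drop; bt. Qed.

Lemma init_rcons (s : seq ab) l : init (s ++ [:: l]) = s.
Proof. by rewrite /init size_cat addn1 /= take_size_cat. Qed.

Lemma drop_last (x : ab) w' : drop (size w') (x :: w') = [:: last x w'].
Proof. by elim: w' x => //= y w' IH x; rewrite -IH. Qed.

Lemma conf_char x w' t i : i < (size w').+1 ->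
  conf Mca false x w' t i =
  if i + t < (size w').+1 then Some (Fw (take t.+1 (drop i (x :: w'))), false)
  else if i + t == (size w').+1 then Some (Fw (drop i (x :: w') ++ [:: last x w']), true)
  else None.
Proof.
elim: t i => [|t IH] i hi.
- by rewrite addn0 hi /= (drop_nth x) //= take0.
- rewrite /= (IH i hi) /right_in /=.
  case: (ltngtP (i + t.+1) (size w').+1) => h.
  + have -> : i + t < (size w').+1 by bt.
    have -> : (i == size w') = false by ef.
    rewrite (IH i.+1); last bt.
    have -> : i.+1 + t < (size w').+1 by bt.
    rewrite (@Frec (take t.+2 _)); last by rewrite size_takel // size_drop /=; bt.
    rewrite sub_init //= sub_behead.
    by case: (blc _).
  + have -> : i + t < (size w').+1 = false by bf.
    by case: eqP.
  + have -> : i + t < (size w').+1 by bt.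
    rewrite (sub_full (w := x :: w')) //.
    case: eqP => e.
    * have -> : t = 0 by nlia.
      subst i. rewrite drop_last /=.
      by case: (last x w').
    * rewrite (IH i.+1); last bt.
      have -> : i.+1 + t < (size w').+1 = false by bf.
      have -> : i.+1 + t == (size w').+1 by et.
      rewrite /= (@Frec (drop i (x :: w') ++ [:: last x w'])); last first.
        by rewrite size_cat size_drop /= addn1 ltnS subn_gt0; bt.
      rewrite init_rcons.
      have -> : behead (drop i (x :: w') ++ [:: last x w']) = drop i.+1 (x :: w') ++ [:: last x w'].
        rewrite -behead_drop (drop_nth x) //; bt.
      by [].
Qed.


Definition accF (x : ab) (w' : seq ab) : bool :=
  if blc (Fw ((x :: w') ++ [:: last x w'])) is Some (Mf true _ _) then true else false.

Lemma acc_conf x w' t : accS (conf Mca false x w' t 0) = (t == (size w').+1) && accF x w'.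
Proof.
rewrite conf_char // add0n drop0.
case: ltngtP => h /=.
- by case: (Fw _).
- by [].
- by rewrite /accF.
Qed.

Lemma last_rc (x y : ab) w' s : x :: w' = s ++ [:: y] -> last x w' = y.
Proof. by rewrite cats1 lastI => /rcons_inj [_ ->]. Qed.

Lemma abw_inj n m n' m' : abw n m = abw n' m' -> n = n' /\ m = m'.
Proof.
move=> E; have [h1 h2] := count_abw n m; have [h3 h4] := count_abw n' m'.
by rewrite E in h1 h2; split; [rewrite -h1 h3 | rewrite -h2 h4].
Qed.

Lemma abwa n : abw n.+1 0 = abw n 0 ++ [:: ab_a].
Proof. by rewrite /abw !cats0; elim: n => //= n ->. Qed.

Lemma msg_ofA x y z : (if msg_of x y z is Some (Mf true _ _) then true else false) = x.
Proof. by case: x; case: y; case: z. Qed.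

Lemma accF_L1 x w' : accF x w' <-> L1 (x :: w').
Proof.
rewrite /accF /L1.
case hs: (sorted leab (x :: w')).
- have E := sorted_abwE hs.
  move: E; set n := count isa _; set m := count (predC isa) _; clearbody n m => E.
  have L1E : (exists2 k, 1 <= k & x :: w' = nseq k ab_a ++ nseq (k + Nat.sqrt k) ab_b) <->
             (1 <= n /\ m = n + Nat.sqrt n).
    split.
    + case=> k hk E2; rewrite E2 in E; have [<- <-] := abw_inj E; by [].
    + by case=> h1 h2; exists n => //; rewrite E h2.
  rewrite L1E; clear L1E.
  case: m E => [|m] E.
  + case: n E => [|n] E; first by [].
    have hl : last x w' = ab_a by apply: last_rc; rewrite E abwa.
    rewrite hl E -abwa F_ab ?addn0 //=.
    split => // [[h1 h2]]; nlia.
  + have hl : last x w' = ab_b by apply: last_rc; rewrite E abwS.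
    rewrite hl E -abwS F_ab ?addnS //.
    case: n {E} => [|n]; first by split => // [[]].
    rewrite /clsd rowc_msg // msg_ofA.
    split => [/eqP|[_ h]]; rewrite /Gt; [move=> h; split => //; nlia|apply/eqP; nlia].
- rewrite Fw_ge2; last by rewrite size_cat /= addn1.
  have -> : sorted leab ((x :: w') ++ [:: last x w']) = false.
    by apply/negP => /cat_sorted2 [h _]; rewrite h in hs.
  split => // [[k _ E]].
  by move: hs; rewrite E sorted_abw.
Qed.


Lemma drop_abw k n m : drop k (abw n m) = abw (n - k) (m - (k - n)).
Proof.
rewrite /abw drop_cat size_nseq.
case: ltnP => h.
- have -> : k - n = 0 by apply/eqP; rewrite subn_eq0 ltnW.
  by rewrite drop_nseq subn0.
- have -> : n - k = 0 by apply/eqP; rewrite subn_eq0.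
  by rewrite drop_nseq.
Qed.

Lemma take_abw t P M : t <= P + M ->
  take t (abw P M) = if t <= P then abw t 0 else abw P (t - P).
Proof.
move=> h; rewrite /abw take_cat size_nseq.
case: (leqP t P) => h2.
- rewrite leq_eqVlt in h2; case/orP: h2 => [/eqP ->|h2].
  + by rewrite ltnn subnn take0 cats0.
  + by rewrite h2 take_nseq ?(ltnW h2) // cats0.
- rewrite ltnNge (ltnW h2) /= take_nseq //.
  by rewrite leq_subLR.
Qed.

Lemma blc_closed p q : 2 <= p + q -> blc (Fw (abw p q)) != None ->
  [/\ 1 <= p, 1 <= q & [|| q == Gt p, q == Bt p | q == Ct p]].
Proof.
move=> h; rewrite F_ab // /clsd.
case: p h => [|p] // h; case: q h => [|q] // h.
rewrite rowc_msg // /msg_of; by case: ifP.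
Qed.


Lemma com_j x w' n m i j : x :: w' = abw n m -> i < size w' ->
  isSome (blS (conf Mca false x w' j i.+1)) ->
  j \in [:: 0; (n - i.+1) + Gt (n - i.+1) - 1; (n - i.+1) + Bt (n - i.+1) - 1;
            (n - i.+1) + Ct (n - i.+1) - 1; (size w').+1 - i.+1].
Proof.
move=> E hi.
have hN : (size w').+1 = n + m by rewrite -size_abw -E.
rewrite conf_char; last by rewrite ltnS.
case: ltngtP => h.
- have hS : forall c, isSome (blS (Some (c, false))) = isSome (blc c) by move=> c /=; case: (blc c).
  rewrite hS.
  case: j h => [|j] h; first by rewrite inE eqxx.
  rewrite E drop_abw take_abw; last by apply/leP; toP; nlia.
  set P := n - i.+1.
  case: (leqP j.+2 P) => h2.
  + move=> hs; have := @blc_closed j.+2 0 (isT : 2 <= j.+2 + 0).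
    by case: (blc (Fw (abw j.+2 0))) hs => // a _ /(_ isT) [_ H0 _]; rewrite ltnn in H0.
  + move=> hs; have := @blc_closed P (j.+2 - P).
    case: (blc (Fw (abw P (j.+2 - P)))) hs => // a _ H.
    have h5 : 2 <= P + (j.+2 - P) by rewrite subnKC // ltnW.
    have [_ h3 /or3P[] /eqP h4] := H h5 isT.
    * have -> : j.+1 = P + Gt P - 1 by toP; nlia.
      by rewrite !inE eqxx !orbT.
    * have -> : j.+1 = P + Bt P - 1 by toP; nlia.
      by rewrite !inE eqxx !orbT.
    * have -> : j.+1 = P + Ct P - 1 by toP; nlia.
      by rewrite !inE eqxx !orbT.
- by [].
- move=> _. have -> : j = (size w').+1 - i.+1 by toP; nlia.
  by rewrite !inE eqxx !orbT.
Qed.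

Lemma count_le (p : pred nat) (L : seq nat) N : (forall j, p j -> j \in L) -> count p (iota 0 N) <= size L.
Proof.
move=> H; apply: leq_trans (sub_count (a2 := mem L) H _) _.
rewrite -size_filter; apply: uniq_leq_size; first by rewrite filter_uniq ?iota_uniq.
by move=> j; rewrite mem_filter => /andP[].
Qed.

Lemma acc_Mca s : acc Mca s = accS s. Proof. by []. Qed.

Lemma acc_iff w : accepts Mca false w <-> L1 w.
Proof.
case: w => [|x w'].
- split; first by case.
  by case=> n hn; case: n hn.
- rewrite -accF_L1; split.
  + case=> T [t _]; rewrite acc_Mca acc_conf => /andP[_ ->] //.
  + move=> h; exists (size w').+1; exists (size w').+1 => //.
    by rewrite acc_Mca acc_conf eqxx h.
Qed.

Theorem mainTheorem1 :
  exists M : CA ab,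
    is_OCA M /\
    realtime M false /\
    (exists c N0 : nat, forall w : seq ab,
        accepts M false w -> N0 <= size w -> mcom M false (fun n => n) w <= c) /\
    (forall w : seq ab, accepts M false w <-> L1 w).
Proof.
exists Mca; split; first by [].
split.
  move=> [|x w'] [T] // [t _]; rewrite acc_Mca acc_conf => /andP[_ h].
  by exists (size w').+1 => //; rewrite acc_Mca acc_conf eqxx h.
split; last exact: acc_iff.
exists 5, 0 => [[|x w']] // /acc_iff [n hn E] _.
rewrite /mcom; apply/bigmax_leqP => i _.
rewrite /com.
set P := n - i.+1.
have H : forall j, (isSome (br Mca (conf Mca false x w' j i)) || isSome (bl Mca (conf Mca false x w' j i.+1))) ->
  j \in [:: 0; P + Gt P - 1; P + Bt P - 1; P + Ct P - 1; (size w').+1 - i.+1].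
  move=> j /orP [//|]; exact: (com_j E (ltn_ord i)).
exact: (count_le _ H).
Qed.
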